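(* Under the setting in the context, write $A=A_1+A_2$, where $A_1$ is the block-diagonal part of $A$ with respect to the partition $\{1,\dots,n\}=\mathcal C_1\sqcup\mathcal C_2$ (so $(A_1)_{ij}=A_{ij}$ if $i,j$ lie in the same class and $0$ otherwise) and $A_2=A-A_1$ is the cross-class part. Write $$M^{-1}=\begin{pmatrix}\widetilde M_{11}&\widetilde M_{12}\\ \widetilde M_{21}&\widetilde M_{22}\end{pmatrix}$$ in block form with respect to this partition. Let $\epsilon>0$. If $\|A_2\|_1<\epsilon$, then $$\|\widetilde M_{12}\|_1<\Big(\frac{1}{c\,d_{\min}}\Big)^2\epsilon,$$ where $c=\min\{1/\lambda,\,w_0\}$, $d_{\min}=\min_i D_{ii}$, and $\|\cdot\|_1$ denotes the matrix norm induced by the vector $\ell^1$-norm (maximum absolute column sum).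
   Context: Let $n\ge1$ and let $\{1,\dots,n\}=\mathcal L\sqcup\mathcal U$ be a partition into labeled indices $\mathcal L$ and unlabeled indices $\mathcal U$. Let $A\in\mathbb R^{n\times n}$ be symmetric with nonnegative entries. Let $D$ be the diagonal matrix with $D_{ii}=\sum_jA_{ij}$, and assume $D_{ii}>0$ for all $i$. Fix $\lambda>0$ and $w_0>0$. Let $P$ be diagonal with $P_{ii}=\frac1\lambda D_{ii}$ for $i\in\mathcal L$ and $P_{ii}=w_0D_{ii}$ for $i\in\mathcal U$. Set $M=D+P-A$; it is invertible. The indices are also partitioned, independently of $\mathcal L,\mathcal U$, by their true class: $\{1,\dots,n\}=\mathcal C_1\sqcup\mathcal C_2$, where $\mathcal C_1$ is the set of positive points and $\mathcal C_2$ the set of negative points. Indices are ordered so that $\mathcal C_1$ comes first. *)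

(* Defs.v *)
From HB Require Import structures.
From mathcomp Require Import all_boot all_order all_algebra.
Set Implicit Arguments. Unset Strict Implicit. Unset Printing Implicit Defensive.
Import Order.TTheory GRing.Theory Num.Theory.
Local Open Scope ring_scope.

(* Index set {1..n} is 'I_(n1 + n2); class C1 = first n1 indices, C2 = last n2. *)

Definition degm {R : realFieldType} {n : nat} (A : 'M[R]_n) (i : 'I_n) : R :=
  \sum_j A i j.

Definition Dmx {R : realFieldType} {n : nat} (A : 'M[R]_n) : 'M[R]_n :=
  diag_mx (\row_i degm A i).

(* P_ii = D_ii / lambda on labeled indices L, w0 * D_ii on unlabeled ones *)
Definition Pmx {R : realFieldType} {n : nat} (A : 'M[R]_n) (L : {set 'I_n})
  (lam w0 : R) : 'M[R]_n :=
  diag_mx (\row_i (if i \in L then lam^-1 * degm A i else w0 * degm A i)).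

Definition Mmx {R : realFieldType} {n : nat} (A : 'M[R]_n) (L : {set 'I_n})
  (lam w0 : R) : 'M[R]_n :=
  Dmx A + Pmx A L lam w0 - A.

Definition A1part {R : realFieldType} {n1 n2 : nat} (A : 'M[R]_(n1 + n2))
  : 'M[R]_(n1 + n2) :=
  \matrix_(i, j) (if (i < n1)%N == (j < n1)%N then A i j else 0).

Definition A2part {R : realFieldType} {n1 n2 : nat} (A : 'M[R]_(n1 + n2))
  : 'M[R]_(n1 + n2) := A - A1part A.

Definition norm1 {R : realFieldType} {m n : nat} (B : 'M[R]_(m, n)) : R :=
  \big[(fun x y : R => Num.max x y)/0]_(j < n) \sum_(i < m) `|B i j|.

(* minimum degree; the default element of the fold is the total degree, which
   (for nonnegative A and n >= 1) does not affect the minimum. *)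
Definition dmin {R : realFieldType} {n : nat} (A : 'M[R]_n) : R :=
  \big[(fun x y : R => Num.min x y)/ (\sum_i degm A i)]_(i < n) degm A i.

(* Main.v *)
Require Import Defs.
From HB Require Import structures.
From mathcomp Require Import all_boot all_order all_algebra.
From mathcomp Require Import ring lra.
Set Implicit Arguments. Unset Strict Implicit. Unset Printing Implicit Defensive.
Import Order.TTheory GRing.Theory Num.Theory.
Local Open Scope ring_scope.

Lemma margin (R : realFieldType) n (N : 'I_n -> 'I_n -> R) (x : 'I_n -> R) d :
  (forall j, d <= 2 * `|N j j| - \sum_i `|N i j|) ->
  d * \sum_j `|x j| <= \sum_i `|\sum_j N i j * x j|.
Proof.
move=> hd.
have step1 i : 2 * `|N i i * x i| - \sum_j `|N i j * x j| <= `|\sum_j N i j * x j|.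
  rewrite [\sum_j `|_|](bigD1 i) //= [\sum_j _ * _](bigD1 i) //=.
  have h1 := lerB_normD (N i i * x i) (\sum_(j | j != i) N i j * x j).
  have h2 := ler_norm_sum (index_enum 'I_n) (fun j => N i j * x j) (fun j => j != i).
  lra.
apply: le_trans (ler_sum _ (fun i _ => step1 i)).
rewrite sumrB exchange_big /= -sumrB mulr_sumr.
apply: ler_sum => j _.
have := hd j.
rewrite normrM.
under eq_bigr => i _ do rewrite normrM.
rewrite -mulr_suml.
have := normr_ge0 (x j).
nra.
Qed.

Lemma margin_col (R : realFieldType) n (B : 'I_n -> 'I_n -> R) (e : 'I_n -> R) j :
  (forall i, 0 <= B i j) -> B j j <= e j ->
  2 * `|e j *+ (j == j) - B j j| - \sum_i `|e i *+ (i == j) - B i j|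
   = e j - \sum_i B i j.
Proof.
move=> hB hjj.
rewrite (bigD1 j) //= [\sum_i B i j](bigD1 j) //= eqxx mulr1n.
have -> : \sum_(i | i != j) `|e i *+ (i == j) - B i j| = \sum_(i | i != j) B i j.
  apply: eq_bigr => i /negbTE ->; rewrite mulr0n sub0r normrN ger0_norm //.
rewrite ger0_norm ?subr_ge0 //.
lra.
Qed.

Lemma bigmin_le (R : realFieldType) (I : eqType) (r : seq I) (F : I -> R) x i0 :
  i0 \in r -> \big[(fun x y : R => Num.min x y)/x]_(i <- r) F i <= F i0.
Proof.
elim: r => [//|a r IH]; rewrite in_cons big_cons => /orP [/eqP ->|/IH h].
  by rewrite ge_min lexx.
by rewrite ge_min h orbT.
Qed.

Lemma le_bigmax (R : realFieldType) (I : eqType) (r : seq I) (F : I -> R) x i0 :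
  i0 \in r -> F i0 <= \big[(fun x y : R => Num.max x y)/x]_(i <- r) F i.
Proof.
elim: r => [//|a r IH]; rewrite in_cons big_cons => /orP [/eqP ->|/IH h].
  by rewrite le_max lexx.
by rewrite le_max h orbT.
Qed.

Theorem lemma4p1 (R : realFieldType) (n1 n2 : nat) (A : 'M[R]_(n1 + n2))
  (L : {set 'I_(n1 + n2)}) (lam w0 eps : R)
  (hn : (0 < n1 + n2)%N)
  (hsym : A^T = A)
  (hnonneg : forall i j, 0 <= A i j)
  (hdeg : forall i, 0 < degm A i)
  (hlam : 0 < lam) (hw0 : 0 < w0) (heps : 0 < eps)
  (hA2 : norm1 (A2part A) < eps) :
  norm1 (ursubmx (invmx (Mmx A L lam w0)))
    < ((Num.min lam^-1 w0 * dmin A)^-1) ^+ 2 * eps.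
Proof.
set M := Mmx A L lam w0.
pose p i := if i \in L then lam^-1 * degm A i else w0 * degm A i.
pose e i := degm A i + p i.
have ME i j : M i j = e i *+ (i == j) - A i j.
  by rewrite /M /Mmx /Dmx /Pmx !mxE mulrnDl.
set c := Num.min lam^-1 w0.
set dm := dmin A.
set del := c * dm.
have hc : 0 < c by rewrite /c lt_min invr_gt0 hlam hw0.
have hdmle i : dm <= degm A i by apply: bigmin_le; rewrite mem_index_enum.
have hdm : 0 < dm.
  rewrite /dm /dmin; apply: (big_ind (fun x => 0 < x)) => //.
    rewrite (bigD1 (Ordinal hn)) //=.
    have h := hdeg (Ordinal hn).
    have h' : 0 <= \sum_(i | i != Ordinal hn) degm A i.
      by apply: sumr_ge0 => i _; apply: ltW.
    lra.
  by move=> x y hx hy; rewrite lt_min hx hy.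
have hdel : 0 < del by rewrite mulr_gt0.
have hp j : del <= p j.
  have h1 := hdmle j.
  have h2 : c <= lam^-1 by rewrite /c ge_min lexx.
  have h3 : c <= w0 by rewrite /c ge_min lexx orbT.
  rewrite /p /del; case: (j \in L); nra.
have hAjj j : A j j <= degm A j.
  rewrite /degm (bigD1 j) //= lerDl; exact: sumr_ge0.
have hcolsum j : \sum_i A i j = degm A j.
  rewrite /degm; apply: eq_bigr => i _.
  by rewrite -[in RHS]hsym mxE.
have hmargM j : del <= 2 * `|M j j| - \sum_i `|M i j|.
  under eq_bigr => i _ do rewrite ME.
  rewrite ME margin_col //; last by have := hp j; have := hAjj j; rewrite /e; lra.
  rewrite hcolsum /e; have := hp j; lra.
pose B (i j : 'I_(n1 + n2)) := if (i < n1)%N == (j < n1)%N then A i j else 0.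
have hmarg1 j : del <= 2 * `|e j *+ (j == j) - B j j| - \sum_i `|e i *+ (i == j) - B i j|.
  have hB i : 0 <= B i j by rewrite /B; case: ifP.
  have hBjj : B j j <= e j.
    rewrite /B eqxx; have := hp j; have := hAjj j; rewrite /e; lra.
  rewrite margin_col //.
  have : \sum_i B i j <= \sum_i A i j.
    by apply: ler_sum => i _; rewrite /B; case: ifP.
  rewrite hcolsum /e; have := hp j; lra.
have hU : M \in unitmx.
  rewrite unitmxE unitfE -det_tr; apply/negP => /det0P [v vn0 hv].
  have h0 : del * \sum_j `|v 0 j| <= \sum_i `|\sum_j M i j * v 0 j|.
    exact: margin.
  have hz : \sum_i `|\sum_j M i j * v 0 j| = 0.
    apply: big1 => i _.
    have := congr1 (fun X : 'rV_(n1+n2) => X 0 i) hv; rewrite [LHS]mxE [RHS]mxE => hvi.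
    suff -> : \sum_j M i j * v 0 j = 0 by rewrite normr0.
    by rewrite -[RHS]hvi; apply: eq_bigr => j _; rewrite [M^T j i]mxE mulrC.
  rewrite hz in h0.
  have hs : \sum_j `|v 0 j| = 0.
    apply/eqP; rewrite eq_le sumr_ge0 // andbT.
    by rewrite -(pmulr_rle0 _ hdel).
  move/negP: vn0; apply; apply/eqP/matrixP => i k; rewrite ord1 mxE.
  have : `|v 0 k| <= \sum_j `|v 0 j|.
    by rewrite (bigD1 k) //= lerDl sumr_ge0.
  rewrite hs => hk; apply/eqP; rewrite -normr_le0 //.
set X := invmx M.
have hMX i k : \sum_l M i l * X l k = (i == k)%:R.
  have := congr1 (fun Y : 'M_(n1+n2) => Y i k) (mulmxV hU).
  by rewrite [LHS]mxE [RHS]mxE.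
set a := norm1 (A2part A).
have ha : 0 <= a.
  rewrite /a /norm1; apply: (big_ind (fun x => 0 <= x)) => //.
    by move=> x y hx hy; rewrite le_max hx.
  by move=> i _; apply: sumr_ge0.
have hcol k : \sum_i `|A2part A i k| <= a.
  by rewrite /a /norm1; apply: (le_bigmax (fun k => \sum_i `|A2part A i k|)); rewrite mem_index_enum.
set bnd := a * (del^-1) ^+ 2.
have hbnd : bnd < del^-1 ^+ 2 * eps.
  by rewrite /bnd mulrC ltr_pM2l // exprn_gt0 // invr_gt0.
apply: le_lt_trans hbnd.
rewrite /norm1; apply: (big_ind (fun x => x <= bnd)).
- by rewrite /bnd mulr_ge0 // exprn_ge0 // invr_ge0 ltW.
- by move=> x y hx hy; rewrite ge_max hx.
move=> j _.
set J := rshift n1 j.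
pose y k := X k J.
have hy : del * \sum_k `|y k| <= 1.
  apply: le_trans (margin y hmargM) _.
  rewrite (bigD1 J) //= hMX eqxx normr1 big1 ?addr0 // => i /negbTE hi.
  by rewrite hMX hi normr0.
pose z (k : 'I_(n1 + n2)) := if (k < n1)%N then y k else 0.
have hz : del * \sum_k `|z k| <= \sum_i `|\sum_k (e i *+ (i == k) - B i k) * z k|.
  exact: (margin z (N := fun i k => e i *+ (i == k) - B i k)).
have hJ : (n1 <= J)%N by rewrite /J /= leq_addr.
have A2E i k : A2part A i k = A i k - B i k by rewrite /A2part !mxE.
have heq i : `|\sum_k (e i *+ (i == k) - B i k) * z k| <= `|\sum_k A2part A i k * y k|.
  case hi: (i < n1)%N.
  - have h0 : \sum_k M i k * y k = 0.
      rewrite /y hMX; case: eqP => // hiJ.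
      by move: hi; rewrite hiJ ltnNge hJ.
    suff -> : \sum_k (e i *+ (i == k) - B i k) * z k = \sum_k A2part A i k * y k by [].
    apply/eqP; rewrite -subr_eq0 -sumrB; apply/eqP; rewrite -[RHS]h0; apply: eq_bigr => k _.
    rewrite ME A2E /z /B hi.
    case hk: (k < n1)%N; first by rewrite eqxx; ring.
    have -> : (i == k) = false.
      by apply/negbTE; apply/eqP => hik; move: hi hk; rewrite hik => ->.
    rewrite /=; ring.
  - rewrite big1 ?normr0 // => k _.
    rewrite /z /B hi; case hk: (k < n1)%N; last by rewrite mulr0.
    have -> : (i == k) = false.
      by apply/negbTE; apply/eqP => hik; move: hi hk; rewrite hik => ->.
    by rewrite /= mulr0n subr0 mul0r.
have hA2y : \sum_i `|\sum_k A2part A i k * y k| <= a * \sum_k `|y k|.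
  apply: le_trans (_ : \sum_i \sum_k `|A2part A i k| * `|y k| <= _).
    apply: ler_sum => i _; apply: le_trans (ler_norm_sum _ _ _) _.
    by apply: ler_sum => k _; rewrite normrM.
  rewrite exchange_big mulr_sumr; apply: ler_sum => k _.
  rewrite -mulr_suml; exact: (ler_wpM2r (normr_ge0 _) (hcol k)).
have hcs : \sum_(i < n1) `|ursubmx X i j| = \sum_k `|z k|.
  rewrite big_split_ord /= [X in _ = _ + X]big1 ?addr0; last first.
    by move=> k _; rewrite /z /= ltnNge leq_addr /= normr0.
  apply: eq_bigr => i _; rewrite /z /= ltn_ord ursubmxEsub mxE.
  by [].
rewrite hcs.
have hz0 : 0 <= \sum_k `|z k| by apply: sumr_ge0.
have hy0 : 0 <= \sum_k `|y k| by apply: sumr_ge0.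
have h1 : del * \sum_k `|z k| <= a * \sum_k `|y k|.
  apply: le_trans hz _; apply: le_trans hA2y.
  by apply: ler_sum => i _; apply: heq.
have hdi : del * del^-1 = 1 by rewrite mulfV // gt_eqF.
have hdi0 : 0 < del^-1 by rewrite invr_gt0.
rewrite /bnd.
set Z := \sum_k `|z k|.
set Y := \sum_k `|y k|.
have h2 : del * (del * Z) <= a.
  have h3 : del * (del * Z) <= del * (a * Y) by rewrite ler_wpM2l // ltW.
  have h4 : a * (del * Y) <= a by rewrite -[X in _ <= X]mulr1 ler_wpM2l.
  apply: le_trans h3 _; rewrite mulrCA; exact: h4.
have -> : Z = del^-1 ^+ 2 * (del * (del * Z)).
  by field; rewrite gt_eqF.
rewrite [a * _]mulrC ler_wpM2l // exprn_ge0 // ltW //.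
Qed.
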